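(* For every positive integer $m$, \begin{align*} \zeta^\star(2,\{1\}_m,\bar 1)=&\frac{m+2}{(m+3)!}(-1)^m\ln^{m+3}(2)+(m+2)(-1)^m\left(\zeta(m+3)-\mathrm{Li}_{m+3}\!\left(\tfrac12\right)\right)\\ &-(m+2)(-1)^m\sum_{j=1}^{m+2}\frac{\ln^{m+3-j}(2)}{(m+3-j)!}\mathrm{Li}_j\!\left(\tfrac12\right)-\frac32\frac{(-1)^m}{(m+1)!}\zeta(2)\ln^{m+1}(2)\\ &-\frac{(-1)^m}{(m+1)!}\sum_{i=1}^{m}(-1)^{i-1}\, i!\binom{m+1}{i}\ln^{m+1-i}(2)\Big\{\zeta^\star(2,\{1\}_{i-1},\bar 1)-\zeta^\star(2,\{1\}_i)\Big\}, \end{align*} where $\zeta^\star(2,\bar 1)=\frac14\zeta(3)-\frac32\zeta(2)\ln(2)$.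
   Context: For nonzero integers $s_1,\dots,s_k$, with $\operatorname{sgn}(s)=1$ if $s>0$ and $-1$ if $s<0$, the multiple zeta star value is $\zeta^\star(s_1,\dots,s_k)=\sum_{n_1\ge n_2\ge\cdots\ge n_k\ge 1}\prod_{j=1}^k n_j^{-|s_j|}\operatorname{sgn}(s_j)^{n_j}$. A barred entry $\bar p$ denotes the negative entry $-p$. The notation $\{1\}_d$ means the entry $1$ repeated $d$ times ($d=0$ means no entries). $\zeta(s)=\sum_{n\ge1}n^{-s}$ is the Riemann zeta function and $\mathrm{Li}_s(x)=\sum_{n\ge1}x^n/n^s$ is the polylogarithm. *)

(* Defs.v *)
From Stdlib Require Import Reals ZArith List.
From Coquelicot Require Import Coquelicot.
Open Scope R_scope.

Fixpoint sumR (f : nat -> R) (N : nat) : R :=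
  match N with
  | O => 0
  | S k => sumR f k + f (S k)
  end.

Definition mzs_term (s : Z) (n : nat) : R :=
  (if Z.ltb 0 s then 1 else -1) ^ n / (INR n) ^ (Z.to_nat (Z.abs s)).

(* Truncated star sum: sum over N >= n_1 >= n_2 >= ... >= n_k >= 1. *)
Fixpoint mzsp (l : list Z) (N : nat) : R :=
  match l with
  | nil => 1
  | s :: t => sumR (fun n => mzs_term s n * mzsp t n) N
  end.

Definition mzs (l : list Z) : R := real (Lim_seq (fun N => mzsp l N)).

Definition zetaR (s : nat) : R := Series (fun k => 1 / (INR (S k)) ^ s).
Definition Li (s : nat) (x : R) : R := Series (fun k => x ^ (S k) / (INR (S k)) ^ s).

Definition ones (d : nat) : list Z := repeat 1%Z d.

(* Main.v *)
Require Import Defs.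
From Stdlib Require Import Reals ZArith List Lia Lra.
From Coquelicot Require Import Coquelicot.
Open Scope R_scope.

Lemma sumR_ext f g N : (forall n, (1 <= n <= N)%nat -> f n = g n) -> sumR f N = sumR g N.
Proof.
  induction N; intros H; simpl; auto.
  rewrite IHN by (intros; apply H; lia). rewrite H by lia. auto.
Qed.

Lemma sumR_plus f g N : sumR (fun n => f n + g n) N = sumR f N + sumR g N.
Proof. induction N; simpl; [lra| rewrite IHN; lra]. Qed.

Lemma sumR_minus f g N : sumR (fun n => f n - g n) N = sumR f N - sumR g N.
Proof. induction N; simpl; [lra| rewrite IHN; lra]. Qed.

Lemma sumR_scal c f N : sumR (fun n => c * f n) N = c * sumR f N.
Proof. induction N; simpl; [lra| rewrite IHN; lra]. Qed.

Lemma sumR_zero N : sumR (fun _ => 0) N = 0.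
Proof. induction N; simpl; [lra| rewrite IHN; lra]. Qed.

Lemma sumR_shift f N : sumR f (S N) = f 1%nat + sumR (fun i => f (S i)) N.
Proof. induction N; simpl in *; [lra| rewrite IHN; lra]. Qed.

Lemma sumR_rev f N : sumR f N = sumR (fun i => f (S N - i)%nat) N.
Proof.
  revert f; induction N; intros f; [simpl; auto|].
  rewrite (sumR_shift (fun i => f (S (S N) - i)%nat)).
  change (sumR f (S N)) with (sumR f N + f (S N)).
  rewrite IHN. replace (S (S N) - 1)%nat with (S N) by lia. simpl. lra.
Qed.

Lemma sumR_swap (f : nat -> nat -> R) N M :
  sumR (fun n => sumR (fun r => f n r) M) N = sumR (fun r => sumR (fun n => f n r) N) M.
Proof.
  induction N; simpl.
  - rewrite sumR_zero; auto.
  - rewrite IHN. rewrite <- sumR_plus. auto.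
Qed.

Lemma sumR_le f g N : (forall n, (1 <= n <= N)%nat -> f n <= g n) -> sumR f N <= sumR g N.
Proof.
  induction N; intros H; simpl; [lra|].
  assert (sumR f N <= sumR g N) by (apply IHN; intros; apply H; lia).
  assert (f (S N) <= g (S N)) by (apply H; lia). lra.
Qed.

Lemma sumR_abs f N : Rabs (sumR f N) <= sumR (fun n => Rabs (f n)) N.
Proof.
  induction N; simpl. rewrite Rabs_R0; lra.
  eapply Rle_trans; [apply Rabs_triang|]. lra.
Qed.

Lemma sumR_sum_n f N : sumR f (S N) = sum_n (fun k => f (S k)) N.
Proof.
  induction N.
  - rewrite sum_O. simpl. lra.
  - rewrite sum_Sn. rewrite <- IHN. simpl. unfold plus; simpl. lra.
Qed.

Lemma mzs_term_1 n : mzs_term 1%Z n = / INR n.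
Proof. unfold mzs_term. simpl. rewrite pow1, Rmult_1_r. unfold Rdiv. ring. Qed.

Lemma mzs_term_m1 n : mzs_term (-1)%Z n = (-1) ^ n / INR n.
Proof. unfold mzs_term. simpl. rewrite Rmult_1_r. auto. Qed.

Lemma mzs_term_2 n : mzs_term 2%Z n = / (INR n ^ 2).
Proof. unfold mzs_term. simpl. rewrite pow1, Rmult_1_r. unfold Rdiv. ring. Qed.

Definition Mz (i : nat) (c : Z) (n : nat) : R := mzsp (ones i ++ c :: nil) n.
Definition hz (i : nat) (n : nat) : R := mzsp (ones i) n.

Lemma Mz_0 i c : Mz i c 0 = 0.
Proof. unfold Mz. destruct i; simpl; auto. Qed.

Lemma hz_0 i : hz (S i) 0 = 0.
Proof. reflexivity. Qed.

Lemma hz_O n : hz 0 n = 1.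
Proof. reflexivity. Qed.

Lemma Mz_O_S c n : Mz 0 c (S n) = Mz 0 c n + mzs_term c (S n).
Proof. unfold Mz. simpl. lra. Qed.

Lemma Mz_S_S i c n : Mz (S i) c (S n) = Mz (S i) c n + / INR (S n) * Mz i c (S n).
Proof. unfold Mz. change (ones (S i) ++ c :: nil) with (1%Z :: (ones i ++ c :: nil)).
  simpl mzsp at 1. rewrite mzs_term_1. reflexivity. Qed.

Lemma hz_S_S i n : hz (S i) (S n) = hz (S i) n + / INR (S n) * hz i (S n).
Proof. unfold hz. change (ones (S i)) with (1%Z :: ones i).
  simpl mzsp at 1. rewrite mzs_term_1. reflexivity. Qed.

Lemma ones_S i : ones (S i) = ones i ++ 1%Z :: nil.
Proof. unfold ones. induction i; simpl; auto. f_equal. simpl in IHi. auto. Qed.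

Lemma Mz_1 i n : Mz i 1%Z n = hz (S i) n.
Proof. unfold Mz, hz. rewrite ones_S. auto. Qed.

Lemma mzsp_2 l N : mzsp (2%Z :: l) N = sumR (fun n => / (INR n ^ 2) * mzsp l n) N.
Proof. simpl. apply sumR_ext. intros. rewrite mzs_term_2. auto. Qed.

Fixpoint Pp (n : nat) : R :=
  match n with O => 1 | S k => Pp k * (2 * INR k + 2) / (2 * INR k + 1) end.

Lemma INR_pos n : (1 <= n)%nat -> 0 < INR n.
Proof. intros; apply lt_0_INR; lia. Qed.

Lemma Pp_ge1 n : 1 <= Pp n.
Proof.
  induction n; simpl; [lra|].
  assert (0 <= INR n) by apply pos_INR.
  apply Rmult_le_reg_r with (2 * INR n + 1); [lra|].
  unfold Rdiv. rewrite Rmult_assoc, Rinv_l by lra. nra.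
Qed.

Lemma hz_bound i n : 0 <= hz i n <= 2 ^ i * Pp n.
Proof.
  revert n; induction i; intros n.
  - rewrite hz_O. simpl. pose proof (Pp_ge1 n). lra.
  - induction n.
    + rewrite hz_0. assert (0 < 2 ^ S i) by (apply pow_lt; lra). simpl Pp. lra.
    + rewrite hz_S_S. specialize (IHi (S n)).
      assert (0 <= INR n) by apply pos_INR.
      rewrite S_INR in *.
      assert (0 < / (INR n + 1)) by (apply Rinv_0_lt_compat; lra).
      split. { apply Rplus_le_le_0_compat; [lra|]. apply Rmult_le_pos; lra. }
      simpl Pp. simpl Pp in IHi.
      set (p := Pp n) in *. set (q := 2 ^ i) in *.
      assert (0 < q) by (unfold q; apply pow_lt; lra).
      assert (Hb : / (INR n + 1) * hz i (S n) <= / (INR n + 1) * (q * (p * (2 * INR n + 2) / (2 * INR n + 1)))).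
      { apply Rmult_le_compat_l; lra. }
      eapply Rle_trans. { apply Rplus_le_compat; [apply IHn| apply Hb]. }
      simpl. unfold q. right. field. lra.
Qed.

Lemma Mz_bound i c n : (c = 1 \/ c = -1)%Z -> Rabs (Mz i c n) <= hz (S i) n.
Proof.
  intros Hc. revert n; induction i; intros n.
  - induction n.
    + rewrite Mz_0, hz_0, Rabs_R0. lra.
    + rewrite Mz_O_S, hz_S_S, hz_O.
      eapply Rle_trans; [apply Rabs_triang|].
      apply Rplus_le_compat; auto.
      destruct Hc; subst; [rewrite mzs_term_1| rewrite mzs_term_m1].
      * rewrite Rabs_right. lra. apply Rle_ge, Rlt_le, Rinv_0_lt_compat, INR_pos; lia.
      * unfold Rdiv. rewrite Rabs_mult, <- RPow_abs. replace (Rabs (-1)) with 1 by (rewrite Rabs_left; lra). rewrite pow1.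
        rewrite Rabs_right. lra. apply Rle_ge, Rlt_le, Rinv_0_lt_compat, INR_pos; lia.
  - induction n.
    + rewrite Mz_0, hz_0, Rabs_R0. lra.
    + rewrite Mz_S_S, hz_S_S.
      eapply Rle_trans; [apply Rabs_triang|].
      apply Rplus_le_compat; auto.
      rewrite Rabs_mult. rewrite (Rabs_right (/ _)).
      apply Rmult_le_compat_l; auto.
      apply Rlt_le, Rinv_0_lt_compat, INR_pos; lia.
      apply Rle_ge, Rlt_le, Rinv_0_lt_compat, INR_pos; lia.
Qed.

Lemma Pp_sum N : (1 <= N)%nat -> sumR (fun n => Pp n / INR n ^ 2) N + 2 * Pp N / INR N <= 6.
Proof.
  induction N; intros H; [lia|].
  destruct N.
  - simpl. lra.
  - specialize (IHN ltac:(lia)).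
    change (sumR (fun n => Pp n / INR n ^ 2) (S (S N))) with
      (sumR (fun n => Pp n / INR n ^ 2) (S N) + Pp (S (S N)) / INR (S (S N)) ^ 2).
    change (Pp (S (S N))) with (Pp (S N) * (2 * INR (S N) + 2) / (2 * INR (S N) + 1)).
    set (p := Pp (S N)) in *.
    assert (1 <= p) by apply Pp_ge1.
    assert (1 <= INR (S N)) by (apply (le_INR 1); lia).
    rewrite (S_INR (S N)).
    set (x := INR (S N)) in *.
    assert (p * (2 * x + 2) / (2 * x + 1) / (x + 1) ^ 2 + 2 * (p * (2 * x + 2) / (2 * x + 1)) / (x + 1) <= 2 * p / x).
    { apply Rminus_le. 
      replace (p * (2 * x + 2) / (2 * x + 1) / (x + 1) ^ 2 + 2 * (p * (2 * x + 2) / (2 * x + 1)) / (x + 1) - 2 * p / x)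
       with (- 2 * p / (x * (x + 1) * (2 * x + 1))) by (field; lra).
      assert (0 < x * (x + 1) * (2 * x + 1)) by (apply Rmult_lt_0_compat; [apply Rmult_lt_0_compat|]; lra).
      unfold Rdiv. assert (0 < / (x * (x + 1) * (2 * x + 1))) by (apply Rinv_0_lt_compat; lra). nra. }
    lra.
Qed.

Lemma isRI_plus (f g : R -> R) a b (If Ig : R) : is_RInt f a b If -> is_RInt g a b Ig -> is_RInt (fun x => f x + g x) a b (If + Ig).
Proof. intros; exact (is_RInt_plus f g a b If Ig H H0). Qed.
Lemma isRI_minus (f g : R -> R) a b (If Ig : R) : is_RInt f a b If -> is_RInt g a b Ig -> is_RInt (fun x => f x - g x) a b (If - Ig).
Proof. intros; exact (is_RInt_minus f g a b If Ig H H0). Qed.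
Lemma isRI_scal (f : R -> R) a b k (If : R) : is_RInt f a b If -> is_RInt (fun x => k * f x) a b (k * If).
Proof. intros; exact (is_RInt_scal f a b k If H). Qed.
Lemma isRI_ext (f g : R -> R) a b (If : R) : a <= b -> (forall x, a <= x <= b -> f x = g x) -> is_RInt f a b If -> is_RInt g a b If.
Proof. intros Hab H HI. apply is_RInt_ext with f; auto. intros x Hx.
  rewrite Rmin_left, Rmax_right in Hx by lra. apply H; lra. Qed.
Lemma isRI_FTC (f df : R -> R) a b : a <= b -> (forall x, a <= x <= b -> is_derive f x (df x)) ->
  (forall x, a <= x <= b -> continuous df x) -> is_RInt df a b (f b - f a).
Proof. intros Hab H1 H2. apply (is_RInt_derive f df a b).
  intros x Hx; rewrite Rmin_left, Rmax_right in Hx by lra; auto.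
  intros x Hx; rewrite Rmin_left, Rmax_right in Hx by lra; auto. Qed.
Lemma isRI_cont (f : R -> R) a b : a <= b -> (forall x, a <= x <= b -> continuous f x) -> is_RInt f a b (RInt f a b).
Proof. intros Hab H. apply (RInt_correct (V:=R_CompleteNormedModule)), (ex_RInt_continuous (V:=R_CompleteNormedModule)).
  intros x Hx; rewrite Rmin_left, Rmax_right in Hx by lra; auto. Qed.
Lemma isRI_abs_le (f g : R -> R) a b (If Ig : R) : a <= b -> (forall x, a <= x <= b -> Rabs (f x) <= g x) ->
  is_RInt f a b If -> is_RInt g a b Ig -> Rabs If <= Ig.
Proof. intros. exact (norm_RInt_le f g a b If Ig H H0 H1 H2). Qed.

Definition L := ln 2.
Lemma L_pos : 0 < L.
Proof. unfold L. rewrite <- ln_1. apply ln_increasing; lra. Qed.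
Lemma exp_L : exp L = 2.
Proof. unfold L. apply exp_ln. lra. Qed.
Lemma L_lt1 : L < 1.
Proof. unfold L. rewrite <- (ln_exp 1). apply ln_increasing. lra.
  pose proof (exp_ineq1 1). lra. Qed.

Definition W (s : R) := 1 - exp s.

Ltac cont := intros; apply (ex_derive_continuous (K:=R_AbsRing) (V:=R_NormedModule)); auto_derive; auto.

Ltac fixINR := repeat match goal with |- context [match ?n with 0%nat => 1 | S _ => INR ?n + 1 end] =>
  change (match n with 0%nat => 1 | S _ => INR n + 1 end) with (INR (S n)) end;
  change RinvImpl.Rinv with Rinv;
  repeat match goal with |- context [?a + - ?b] => change (a + - b) with (a - b) end.

Ltac toR := match goal with |- @eq _ ?a ?b => change (@eq R a b) end.

Definition Iz (m n : nat) := RInt (fun s => s ^ m * W s ^ n) 0 L.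

Lemma Iz_correct m n : is_RInt (fun s => s ^ m * W s ^ n) 0 L (Iz m n).
Proof. apply isRI_cont. pose L_pos; lra. unfold W; cont. Qed.

Lemma Iz_rec0 n : Iz 0 (S n) - Iz 0 n = (-1) ^ (S n) / INR (S n).
Proof.
  assert (HL := L_pos).
  assert (Hd : forall x, 0 <= x <= L -> is_derive (fun s => / INR (S n) * W s ^ (S n)) x
          (x ^ 0 * W x ^ (S n) - x ^ 0 * W x ^ n)).
  { intros x Hx. unfold W. auto_derive; auto. fixINR. simpl pow. field. apply not_0_INR; lia. }
  assert (Hc : forall x, 0 <= x <= L -> continuous (fun s => s ^ 0 * W s ^ (S n) - s ^ 0 * W s ^ n) x).
  { unfold W; cont. }
  rewrite <- (is_RInt_unique _ _ _ _ (isRI_minus _ _ _ _ _ _ (Iz_correct 0 (S n)) (Iz_correct 0 n))).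
  rewrite (is_RInt_unique _ _ _ _ (isRI_FTC _ _ 0 L ltac:(lra) Hd Hc)).
  unfold W. rewrite exp_L, exp_0. replace (1 - 1) with 0 by ring. rewrite pow_i by lia.
  replace (1 - 2) with (-1) by ring. field. apply not_0_INR; lia.
Qed.

Lemma Iz_recS m n : Iz (S m) (S n) - Iz (S m) n =
  / INR (S n) * ((-1) ^ (S n) * L ^ (S m) - INR (S m) * Iz m (S n)).
Proof.
  assert (HL := L_pos).
  assert (Hd : forall x, 0 <= x <= L -> is_derive (fun s => / INR (S n) * (s ^ (S m) * W s ^ (S n))) x
          ((x ^ (S m) * W x ^ (S n) - x ^ (S m) * W x ^ n) + / INR (S n) * INR (S m) * (x ^ m * W x ^ (S n)))).
  { intros x Hx. unfold W. auto_derive; auto. fixINR. simpl pow. field. apply not_0_INR; lia. }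
  assert (Hc : forall x, 0 <= x <= L -> continuous (fun x => (x ^ (S m) * W x ^ (S n) - x ^ (S m) * W x ^ n) + / INR (S n) * INR (S m) * (x ^ m * W x ^ (S n))) x).
  { unfold W; cont. }
  assert (H1 := isRI_FTC _ _ 0 L ltac:(lra) Hd Hc).
  assert (H2 := isRI_minus _ _ _ _ _ _ H1 (isRI_scal _ _ _ (/ INR (S n) * INR (S m)) _ (Iz_correct m (S n)))).
  assert (H3 := isRI_minus _ _ _ _ _ _ (Iz_correct (S m) (S n)) (Iz_correct (S m) n)).
  rewrite <- (is_RInt_unique _ _ _ _ H3).
  assert (H4 : is_RInt (fun s => s ^ S m * W s ^ S n - s ^ S m * W s ^ n) 0 L
    ((/ INR (S n) * (L ^ S m * W L ^ S n) - / INR (S n) * (0 ^ S m * W 0 ^ S n)) - / INR (S n) * INR (S m) * Iz m (S n))).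
  { eapply isRI_ext; [| |exact H2]. lra. intros; simpl; ring. }
  rewrite (is_RInt_unique _ _ _ _ H4).
  unfold W. rewrite exp_L, exp_0. replace (1 - 1) with 0 by ring. rewrite !pow_i by lia.
  replace (1 - 2) with (-1) by ring. field. apply not_0_INR; lia.
Qed.

Lemma Iz_n0 m : Iz m 0 = L ^ (S m) / INR (S m).
Proof.
  assert (HL := L_pos).
  assert (Hd : forall x, 0 <= x <= L -> is_derive (fun s => s ^ (S m) / INR (S m)) x (x ^ m * W x ^ 0)).
  { intros x Hx. auto_derive; auto. fixINR. rewrite pow_O. field. apply not_0_INR; lia. }
  assert (Hc : forall x, 0 <= x <= L -> continuous (fun x => x ^ m * W x ^ 0) x).
  { unfold W; cont. }
  rewrite <- (is_RInt_unique _ _ _ _ (Iz_correct m 0)).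
  rewrite (is_RInt_unique _ _ _ _ (isRI_FTC _ _ 0 L ltac:(lra) Hd Hc)).
  rewrite pow_i by lia. toR. unfold Rdiv. ring.
Qed.

Definition Phi (m n : nat) := (-1) ^ m / INR (fact m) * (Iz m n - Iz m 0).

Lemma Phi_0 m : Phi m 0 = 0.
Proof. unfold Phi. ring. Qed.

Lemma Phi_rec0 n : Phi 0 (S n) = Phi 0 n + (-1) ^ (S n) / INR (S n).
Proof. unfold Phi. pose proof (Iz_rec0 n). rewrite pow_O. simpl fact. change (INR 1) with 1.
  unfold Rdiv in *. rewrite Rinv_1. lra. Qed.

Lemma Phi_recS m n : Phi (S m) (S n) = Phi (S m) n +
  / INR (S n) * (Phi m (S n) + (-L) ^ (S m) / INR (fact (S m)) * ((-1) ^ (S n) - 1)).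
Proof.
  unfold Phi. pose proof (Iz_recS m n) as H. rewrite !Iz_n0.
  assert (Iz (S m) (S n) = Iz (S m) n + / INR (S n) * ((-1) ^ S n * L ^ S m - INR (S m) * Iz m (S n))) as H' by lra.
  rewrite H'. rewrite fact_simpl, mult_INR.
  replace (-L) with (-1 * L) by ring. rewrite Rpow_mult_distr.
  assert (INR (fact m) <> 0) by apply INR_fact_neq_0.
  assert (INR (S n) <> 0) by (apply not_0_INR; lia).
  assert (INR (S m) <> 0) by (apply not_0_INR; lia).
  simpl pow. field. repeat split; auto; apply not_0_INR; lia.
Qed.

Fixpoint sz (f : nat -> R) (m : nat) : R :=
  match m with O => f 0%nat | S k => sz f k + f (S k) end.

Lemma sz_ext f g m : (forall r, (r <= m)%nat -> f r = g r) -> sz f m = sz g m.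
Proof. induction m; intros H; simpl. apply H; lia. rewrite IHm by (intros; apply H; lia). rewrite H by lia. auto. Qed.
Lemma sz_plus f g m : sz (fun r => f r + g r) m = sz f m + sz g m.
Proof. induction m; simpl; [auto| rewrite IHm; ring]. Qed.
Lemma sz_scal c f m : sz (fun r => c * f r) m = c * sz f m.
Proof. induction m; simpl; [auto| rewrite IHm; ring]. Qed.
Lemma sz_zero m : sz (fun _ => 0) m = 0.
Proof. induction m; simpl; [auto| rewrite IHm; ring]. Qed.

Definition Tz (i n : nat) := Mz i (-1)%Z n - Mz i 1%Z n.

Lemma Tz_0 i : Tz i 0 = 0.
Proof. unfold Tz. rewrite !Mz_0. ring. Qed.
Lemma Tz_rec0 n : Tz 0 (S n) = Tz 0 n + ((-1) ^ (S n) - 1) / INR (S n).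
Proof. unfold Tz. rewrite !Mz_O_S, mzs_term_1, mzs_term_m1. unfold Rdiv. ring. Qed.
Lemma Tz_recS i n : Tz (S i) (S n) = Tz (S i) n + / INR (S n) * Tz i (S n).
Proof. unfold Tz. rewrite !Mz_S_S. ring. Qed.

Definition cL (r : nat) := (-L) ^ r / INR (fact r).

Lemma Phi_ident m n : Phi m n = sz (fun r => cL r * Tz (m - r) n) m + hz (S m) n.
Proof.
  revert n; induction m; intros n.
  - induction n.
    + rewrite Phi_0. simpl. rewrite Tz_0, hz_0. ring.
    + rewrite Phi_rec0. rewrite IHn. simpl sz. rewrite Tz_rec0, hz_S_S, hz_O.
      unfold cL. rewrite pow_O. simpl fact. change (INR 1) with 1. replace (0 - 0)%nat with 0%nat by lia. unfold Rdiv. rewrite Rinv_1. ring.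
  - induction n.
    + rewrite Phi_0, hz_0. rewrite (sz_ext _ (fun _ => 0)). rewrite sz_zero; ring.
      intros r _. rewrite Tz_0. ring.
    + rewrite Phi_recS, IHn, IHm. rewrite (hz_S_S (S m) n).
      change (sz (fun r => cL r * Tz (S m - r) (S n)) (S m)) with
        (sz (fun r => cL r * Tz (S m - r) (S n)) m + cL (S m) * Tz (S m - S m) (S n)).
      change (sz (fun r => cL r * Tz (S m - r) n) (S m)) with
        (sz (fun r => cL r * Tz (S m - r) n) m + cL (S m) * Tz (S m - S m) n).
      replace (S m - S m)%nat with 0%nat by lia.
      rewrite Tz_rec0.
      rewrite (sz_ext (fun r => cL r * Tz (S m - r) (S n))
                      (fun r => cL r * Tz (S m - r) n + / INR (S n) * (cL r * Tz (m - r) (S n)))).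
      * rewrite sz_plus, sz_scal. unfold cL. unfold Rdiv. ring.
      * intros r Hr. replace (S m - r)%nat with (S (m - r)) by lia. rewrite Tz_recS. ring.
Qed.

Lemma is_series_lim a l : is_series a l <-> is_lim_seq (sum_n a) l.
Proof. unfold is_series, is_lim_seq. simpl. tauto. Qed.

Lemma lim_sumR_shift (a : nat -> R) l :
  is_series (fun k => a (S k)) l -> is_lim_seq (sumR a) l.
Proof.
  intros H. apply is_lim_seq_incr_1. apply is_series_lim in H.
  eapply is_lim_seq_ext; [|exact H]. intros n. rewrite sumR_sum_n. auto.
Qed.

Lemma conv_gen (a : nat -> R) C :
  (forall n, (1 <= n)%nat -> Rabs (a n) <= C * (Pp n / INR n ^ 2)) ->
  exists l : R, is_lim_seq (sumR a) (Finite l).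
Proof.
  intros H.
  assert (HC : 0 <= C).
  { specialize (H 1%nat (le_n 1)). pose proof (Rabs_pos (a 1%nat)). simpl in H.
    assert (0 < 2 * 2 / (1 * (1 * 1))) by lra.
    destruct (Rle_or_lt 0 C); auto. nra. }
  assert (Hb : ex_series (fun k => C * (Pp (S k) / INR (S k) ^ 2))).
  { destruct (ex_finite_lim_seq_incr (sum_n (fun k => C * (Pp (S k) / INR (S k) ^ 2))) (6 * C)) as [l Hl].
    - intros n. rewrite sum_Sn. match goal with |- _ <= plus ?x ?y => change (plus x y) with (x + y) end.
      assert (0 <= Pp (S (S n)) / INR (S (S n)) ^ 2).
      { apply Rmult_le_pos. pose proof (Pp_ge1 (S (S n))); lra.
        apply Rlt_le, Rinv_0_lt_compat, pow_lt, INR_pos; lia. }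
      nra.
    - intros n. rewrite <- (sumR_sum_n (fun k => C * (Pp k / INR k ^ 2))).
      rewrite sumR_scal. pose proof (Pp_sum (S n) ltac:(lia)).
      assert (0 <= 2 * Pp (S n) / INR (S n)).
      { apply Rmult_le_pos. pose proof (Pp_ge1 (S n)); lra.
        apply Rlt_le, Rinv_0_lt_compat, INR_pos; lia. }
      nra.
    - exists l. apply is_series_lim. auto. }
  assert (Ha : ex_series (fun k => a (S k))).
  { apply (ex_series_le (K:=R_AbsRing) (V:=R_CompleteNormedModule) _ _ ) with (2 := Hb). intros n. apply H. lia. }
  destruct Ha as [l Hl]. exists l. apply lim_sumR_shift. auto.
Qed.

Lemma conv_A i c : (c = 1 \/ c = -1)%Z -> exists l, is_lim_seq (mzsp (2%Z :: ones i ++ c :: nil)) (Finite l).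
Proof.
  intros Hc.
  destruct (conv_gen (fun n => / (INR n ^ 2) * Mz i c n) (2 ^ (S i))) as [l Hl].
  - intros n Hn. rewrite Rabs_mult. rewrite Rabs_right.
    2: { apply Rle_ge, Rlt_le, Rinv_0_lt_compat, pow_lt, INR_pos; lia. }
    pose proof (Mz_bound i c n Hc). pose proof (hz_bound (S i) n).
    assert (0 < / INR n ^ 2) by (apply Rinv_0_lt_compat, pow_lt, INR_pos; lia).
    unfold Rdiv. nra.
  - exists l. eapply is_lim_seq_ext; [|exact Hl]. intros N. rewrite mzsp_2. auto.
Qed.

Lemma mzs_lim (l0 : list Z) l : is_lim_seq (mzsp l0) (Finite l) -> mzs l0 = l.
Proof. intros H. unfold mzs. replace (Lim_seq (fun N => mzsp l0 N)) with (Finite l). auto. symmetry; apply is_lim_seq_unique; exact H. Qed.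

Lemma lim_sumR_fin (f : nat -> nat -> R) (l : nat -> R) M :
  (forall r, (1 <= r <= M)%nat -> is_lim_seq (fun N => f r N) (l r)) ->
  is_lim_seq (fun N => sumR (fun r => f r N) M) (sumR l M).
Proof.
  induction M; intros H; simpl.
  - apply is_lim_seq_const.
  - apply is_lim_seq_plus'. apply IHM. intros; apply H; lia. apply H; lia.
Qed.

Lemma sz_sumR f m : sz f m = f 0%nat + sumR f m.
Proof. induction m; simpl; [ring| rewrite IHm; ring]. Qed.

Lemma Series_from_sumR (a : nat -> R) l : is_lim_seq (sumR a) (Finite l) -> Series (fun k => a (S k)) = l.
Proof.
  intros H. apply is_series_unique. apply is_series_lim.
  apply is_lim_seq_incr_1 in H. eapply is_lim_seq_ext; [|exact H].
  intros n. cbv beta. rewrite sumR_sum_n. auto.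
Qed.

Lemma inv_pow_le n e : (1 <= n)%nat -> (2 <= e)%nat -> / INR n ^ e <= / INR n ^ 2.
Proof.
  intros Hn He. assert (1 <= INR n) by (apply (le_INR 1); lia).
  apply Rinv_le_contravar. apply pow_lt; lra.
  replace e with (2 + (e - 2))%nat by lia. rewrite pow_add.
  assert (1 <= INR n ^ (e - 2)) by (apply pow_R1_Rle; lra).
  assert (0 < INR n ^ 2) by (apply pow_lt; lra). nra.
Qed.

Lemma zeta_lim e : (2 <= e)%nat -> is_lim_seq (sumR (fun n => 1 / INR n ^ e)) (zetaR e).
Proof.
  intros He. destruct (conv_gen (fun n => 1 / INR n ^ e) 1) as [l Hl].
  - intros n Hn. rewrite Rabs_right.
    2: { apply Rle_ge. unfold Rdiv. rewrite Rmult_1_l. apply Rlt_le, Rinv_0_lt_compat, pow_lt, INR_pos; lia. }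
    pose proof (inv_pow_le n e Hn He). pose proof (Pp_ge1 n).
    assert (0 < / INR n ^ 2) by (apply Rinv_0_lt_compat, pow_lt, INR_pos; lia).
    unfold Rdiv. nra.
  - unfold zetaR. rewrite (Series_from_sumR _ l Hl). auto.
Qed.

Lemma INR_le_pow2 n : INR n <= 2 ^ n.
Proof.
  induction n. simpl. lra. rewrite S_INR. simpl pow. assert (1 <= 2 ^ n) by (apply pow_R1_Rle; lra). lra.
Qed.

Lemma Li_half_lim e : (1 <= e)%nat -> is_lim_seq (sumR (fun n => (1/2) ^ n / INR n ^ e)) (Li e (1/2)).
Proof.
  intros He. destruct (conv_gen (fun n => (1/2) ^ n / INR n ^ e) 1) as [l Hl].
  - intros n Hn. assert (Hp : 0 < INR n) by (apply INR_pos; lia).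
    assert (0 < (1/2) ^ n) by (apply pow_lt; lra).
    assert (0 < INR n ^ e) by (apply pow_lt; lra).
    rewrite Rabs_right.
    2: { apply Rle_ge. unfold Rdiv. apply Rmult_le_pos; [lra|]. apply Rlt_le, Rinv_0_lt_compat; lra. }
    pose proof (Pp_ge1 n).
    assert (INR n ^ 1 <= INR n ^ e) by (apply Rle_pow; [apply (le_INR 1); lia| lia]).
    assert (INR n * (1/2) ^ n <= 1).
    { replace ((1/2)^n) with (/ 2^n) by (rewrite <- pow_inv; f_equal; field).
      assert (0 < 2 ^ n) by (apply pow_lt; lra). pose proof (INR_le_pow2 n).
      apply Rmult_le_reg_r with (2 ^ n); auto. rewrite Rmult_assoc, Rinv_l by lra. lra. }
    simpl in H2. rewrite Rmult_1_r in H2.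
    apply Rle_trans with (/ INR n ^ 2).
    + unfold Rdiv. apply Rle_trans with ((1/2) ^ n * / INR n).
      * apply Rmult_le_compat_l; [lra|]. apply Rinv_le_contravar; lra.
      * apply Rmult_le_reg_r with (INR n ^ 2). apply pow_lt; lra.
        rewrite Rinv_l by (apply pow_nonzero; lra). simpl.
        replace ((1/2) ^ n * / INR n * (INR n * (INR n * 1))) with (INR n * (1/2) ^ n) by (field; lra). lra.
    + assert (0 < / INR n ^ 2) by (apply Rinv_0_lt_compat, pow_lt; lra).
      unfold Rdiv. nra.
  - unfold Li. rewrite (Series_from_sumR _ l Hl). auto.
Qed.

Lemma sumR_even_odd f M : sumR f (2 * M) = sumR (fun k => f (2 * k)%nat) M + sumR (fun k => f (2 * k - 1)%nat) M.
Proof.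
  induction M. simpl. lra.
  replace (2 * S M)%nat with (S (S (2 * M))) by lia.
  change (sumR f (S (S (2 * M)))) with (sumR f (2 * M) + f (S (2 * M)) + f (S (S (2 * M)))).
  change (sumR (fun k => f (2 * k)%nat) (S M)) with (sumR (fun k => f (2 * k)%nat) M + f (2 * S M)%nat).
  change (sumR (fun k => f (2 * k - 1)%nat) (S M)) with (sumR (fun k => f (2 * k - 1)%nat) M + f (2 * S M - 1)%nat).
  rewrite IHM. replace (2 * S M)%nat with (S (S (2 * M))) by lia.
  replace (S (S (2 * M)) - 1)%nat with (S (2 * M)) by lia. lra.
Qed.

Definition GL (N : nat) := sumR (fun n => / INR n ^ 2 * ((-1) ^ n - 1)) N.

Lemma GL_lim : is_lim_seq GL (- (3 / 2) * zetaR 2).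
Proof.
  destruct (conv_gen (fun n => / INR n ^ 2 * ((-1) ^ n - 1)) 2) as [l Hl].
  - intros n Hn. rewrite Rabs_mult. rewrite Rabs_right.
    2: { apply Rle_ge, Rlt_le, Rinv_0_lt_compat, pow_lt, INR_pos; lia. }
    assert (Rabs ((-1) ^ n - 1) <= 2).
    { unfold Rminus. eapply Rle_trans; [apply Rabs_triang|].
      rewrite Rabs_Ropp, Rabs_R1. rewrite <- RPow_abs. replace (Rabs (-1)) with 1 by (rewrite Rabs_left; lra).
      rewrite pow1. lra. }
    pose proof (Pp_ge1 n). assert (0 < / INR n ^ 2) by (apply Rinv_0_lt_compat, pow_lt, INR_pos; lia).
    unfold Rdiv. nra.
  - assert (He : forall M, GL (2 * M) = -2 * sumR (fun n => 1 / INR n ^ 2) (2 * M) + / 2 * sumR (fun n => 1 / INR n ^ 2) M).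
    { intros M. unfold GL. rewrite !sumR_even_odd.
      transitivity (sumR (fun k => -2 * (1 / INR (2 * k) ^ 2 + 1 / INR (2 * k - 1) ^ 2) + / 2 * (1 / INR k ^ 2)) M).
      2: { rewrite sumR_plus, !sumR_scal, sumR_plus. ring. }
      rewrite <- sumR_plus. apply sumR_ext. intros k Hk.
      replace (2 * k)%nat with (2 * k)%nat by auto.
      rewrite !pow_1_even. 
      replace (2 * k - 1)%nat with (S (2 * (k - 1))) by lia. rewrite pow_1_odd.
      replace (S (2 * (k - 1))) with (2 * k - 1)%nat by lia.
      rewrite mult_INR. change (INR 2) with 2.
      assert (0 < INR k) by (apply INR_pos; lia).
      assert (INR (2 * k - 1) <> 0) by (apply not_0_INR; lia).
      field. lra. }
    assert (Hsub : is_lim_seq (fun M => GL (2 * M)) l).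
    { apply (is_lim_seq_subseq GL l (fun M => (2 * M)%nat)).
      - intros P [N HN]. exists N. intros n Hn. apply HN. lia.
      - exact Hl. }
    assert (Hsub2 : is_lim_seq (fun M => GL (2 * M)) (-2 * zetaR 2 + / 2 * zetaR 2)).
    { eapply is_lim_seq_ext. intros M; symmetry; apply He.
      apply is_lim_seq_plus'.
      - apply (is_lim_seq_scal_l _ (-2) (Finite (zetaR 2))).
        apply (is_lim_seq_subseq (sumR (fun n => 1 / INR n ^ 2)) _ (fun M => (2 * M)%nat)).
        + intros P [N HN]. exists N. intros n Hn. apply HN. lia.
        + apply zeta_lim; lia.
      - apply (is_lim_seq_scal_l _ (/ 2) (Finite (zetaR 2))). apply zeta_lim; lia. }
    assert (l = -2 * zetaR 2 + / 2 * zetaR 2).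
    { apply is_lim_seq_unique in Hsub. apply is_lim_seq_unique in Hsub2. rewrite Hsub in Hsub2. injection Hsub2. auto. }
    replace (- (3 / 2) * zetaR 2) with l by lra. exact Hl.
Qed.

Lemma exp_INR_mult x k : exp (INR k * x) = exp x ^ k.
Proof. induction k. simpl. rewrite Rmult_0_l, exp_0. auto.
  rewrite S_INR, Rmult_plus_distr_r, exp_plus, IHk, Rmult_1_l. simpl. ring. Qed.

Lemma exp_mkL k : exp (- INR k * L) = (1 / 2) ^ k.
Proof. replace (- INR k * L) with (- (INR k * L)) by ring. rewrite exp_Ropp, exp_INR_mult, exp_L.
  rewrite <- pow_inv. f_equal. field. Qed.

Definition Jz (p k : nat) := RInt (fun s => s ^ p * exp (- INR k * s)) 0 L.

Lemma Jz_correct p k : is_RInt (fun s => s ^ p * exp (- INR k * s)) 0 L (Jz p k).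
Proof. apply isRI_cont. pose L_pos; lra. cont. Qed.

Lemma Jz_0 k : (1 <= k)%nat -> Jz 0 k = (1 - exp (- INR k * L)) / INR k.
Proof.
  intros Hk. assert (HL := L_pos). assert (Hk' := INR_pos k Hk).
  assert (Hd : forall x, 0 <= x <= L -> is_derive (fun s => - exp (- INR k * s) / INR k) x (x ^ 0 * exp (- INR k * x))).
  { intros x Hx. auto_derive; auto. fixINR. simpl pow. field. lra. }
  assert (Hc : forall x, 0 <= x <= L -> continuous (fun x => x ^ 0 * exp (- INR k * x)) x).
  { cont. }
  rewrite <- (is_RInt_unique _ _ _ _ (Jz_correct 0 k)).
  rewrite (is_RInt_unique _ _ _ _ (isRI_FTC _ _ 0 L ltac:(lra) Hd Hc)).
  toR. rewrite Rmult_0_r, exp_0. field. lra.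
Qed.

Lemma Jz_S p k : (1 <= k)%nat -> Jz (S p) k = (INR (S p) * Jz p k - L ^ (S p) * exp (- INR k * L)) / INR k.
Proof.
  intros Hk. assert (HL := L_pos). assert (Hk' := INR_pos k Hk).
  assert (Hd : forall x, 0 <= x <= L -> is_derive (fun s => - s ^ (S p) * exp (- INR k * s) / INR k) x
     (x ^ (S p) * exp (- INR k * x) - INR (S p) / INR k * (x ^ p * exp (- INR k * x)))).
  { intros x Hx. auto_derive; auto. fixINR. simpl pow. field. lra. }
  assert (Hc : forall x, 0 <= x <= L -> continuous (fun x => x ^ (S p) * exp (- INR k * x) - INR (S p) / INR k * (x ^ p * exp (- INR k * x))) x).
  { cont. }
  assert (H1 := isRI_FTC _ _ 0 L ltac:(lra) Hd Hc).
  assert (H2 := isRI_plus _ _ _ _ _ _ H1 (isRI_scal _ _ _ (INR (S p) / INR k) _ (Jz_correct p k))).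
  assert (H3 : is_RInt (fun s => s ^ (S p) * exp (- INR k * s)) 0 L
     ((- L ^ S p * exp (- INR k * L) / INR k - - 0 ^ S p * exp (- INR k * 0) / INR k) + INR (S p) / INR k * Jz p k)).
  { eapply isRI_ext; [| |exact H2]. lra. intros. cbv beta. ring. }
  rewrite <- (is_RInt_unique _ _ _ _ (Jz_correct (S p) k)).
  rewrite (is_RInt_unique _ _ _ _ H3). rewrite pow_i by lia. toR. field. lra.
Qed.

Definition Jc (p k : nat) := INR (fact p) / INR k ^ (S p) -
  exp (- INR k * L) * sz (fun j => INR (fact p) / INR (fact j) * L ^ j / INR k ^ (S p - j)) p.

Lemma Jz_closed p k : (1 <= k)%nat -> Jz p k = Jc p k.
Proof.
  intros Hk. assert (Hk' := INR_pos k Hk). induction p.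
  - rewrite Jz_0 by auto. unfold Jc. simpl. field. lra.
  - rewrite Jz_S, IHp by auto. unfold Jc.
    change (sz (fun j => INR (fact (S p)) / INR (fact j) * L ^ j / INR k ^ (S (S p) - j)) (S p)) with
      (sz (fun j => INR (fact (S p)) / INR (fact j) * L ^ j / INR k ^ (S (S p) - j)) p +
       INR (fact (S p)) / INR (fact (S p)) * L ^ (S p) / INR k ^ (S (S p) - S p)).
    rewrite (sz_ext (fun j => INR (fact (S p)) / INR (fact j) * L ^ j / INR k ^ (S (S p) - j))
                    (fun j => INR (S p) / INR k * (INR (fact p) / INR (fact j) * L ^ j / INR k ^ (S p - j)))).
    + rewrite sz_scal. replace (S (S p) - S p)%nat with 1%nat by lia.
      rewrite fact_simpl, mult_INR.
      assert (INR (fact p) <> 0) by apply INR_fact_neq_0.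
      assert (INR (S p) <> 0) by (apply not_0_INR; lia).
      simpl pow. toR. field. repeat split; try lra; auto; apply pow_nonzero; lra.
    + intros j Hj. replace (S (S p) - j)%nat with (S (S p - j)) by lia.
      rewrite fact_simpl, mult_INR. simpl pow.
      assert (INR (fact j) <> 0) by apply INR_fact_neq_0.
      assert (INR k ^ (S p - j) <> 0) by (apply pow_nonzero; lra).
      field. repeat split; try lra; auto.
Qed.

Lemma lim_sz (f : nat -> nat -> R) (l : nat -> R) M :
  (forall r, (r <= M)%nat -> is_lim_seq (fun N => f r N) (l r)) ->
  is_lim_seq (fun N => sz (fun r => f r N) M) (sz l M).
Proof.
  induction M; intros H; simpl.
  - apply H; lia.
  - apply is_lim_seq_plus'. apply IHM. intros; apply H; lia. apply H; lia.
Qed.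

Lemma sz_sumR_swap (g : nat -> nat -> R) p N :
  sz (fun j => sumR (fun k => g j k) N) p = sumR (fun k => sz (fun j => g j k) p) N.
Proof.
  induction p; simpl. auto. rewrite IHp, <- sumR_plus. auto.
Qed.

Lemma Jc_sum_lim p : (1 <= p)%nat ->
  is_lim_seq (sumR (fun k => Jc p k))
    (INR (fact p) * zetaR (S p) - sz (fun j => INR (fact p) / INR (fact j) * L ^ j * Li (S p - j) (1 / 2)) p).
Proof.
  intros Hp.
  apply (is_lim_seq_ext (fun N => INR (fact p) * sumR (fun k => 1 / INR k ^ S p) N -
      sz (fun j => INR (fact p) / INR (fact j) * L ^ j * sumR (fun k => (1 / 2) ^ k / INR k ^ (S p - j)) N) p)).
  - intros N. unfold Jc. rewrite sumR_minus, <- sumR_scal. f_equal.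
    + apply sumR_ext. intros; unfold Rdiv; ring.
    + transitivity (sz (fun j => sumR (fun k => INR (fact p) / INR (fact j) * L ^ j * ((1 / 2) ^ k / INR k ^ (S p - j))) N) p).
      { apply sz_ext. intros. rewrite sumR_scal. auto. }
      rewrite sz_sumR_swap. apply sumR_ext. intros k Hk.
      rewrite exp_mkL, <- sz_scal. apply sz_ext. intros. unfold Rdiv. ring.
  - apply is_lim_seq_minus'.
    + apply (is_lim_seq_scal_l _ _ (Finite _)). apply zeta_lim. lia.
    + apply lim_sz. intros r Hr. apply (is_lim_seq_scal_l _ _ (Finite _)). apply Li_half_lim. lia.
Qed.

Lemma der_mult (f g : R -> R) x df dg : is_derive f x df -> is_derive g x dg ->
  is_derive (fun s => f s * g s) x (df * g x + f x * dg).
Proof. intros H1 H2. apply (is_derive_mult f g x df dg H1 H2). intros; apply Rmult_comm. Qed.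
Lemma der_plus (f g : R -> R) x df dg : is_derive f x df -> is_derive g x dg ->
  is_derive (fun s => f s + g s) x (df + dg).
Proof. intros H1 H2. apply (is_derive_plus f g x df dg H1 H2). Qed.
Lemma der_const (c x : R) : is_derive (fun _ => c) x 0.
Proof. apply (is_derive_const (K:=R_AbsRing) (V:=R_NormedModule)). Qed.
Lemma cont_of_exd (f : R -> R) x : ex_derive f x -> continuous f x.
Proof. apply (ex_derive_continuous (K:=R_AbsRing) (V:=R_NormedModule)). Qed.

Lemma der_sumR (f : nat -> R -> R) (df : nat -> R) N x :
  (forall n, (1 <= n <= N)%nat -> is_derive (f n) x (df n)) ->
  is_derive (fun s => sumR (fun n => f n s) N) x (sumR df N).
Proof.
  induction N; intros H; simpl.
  - apply der_const.
  - apply der_plus. apply IHN; intros; apply H; lia. apply H; lia.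
Qed.

Lemma exd_sumR (f : nat -> R -> R) N x :
  (forall n, (1 <= n <= N)%nat -> ex_derive (f n) x) ->
  ex_derive (fun s => sumR (fun n => f n s) N) x.
Proof.
  intros H. exists (sumR (fun n => Derive (f n) x) N). apply der_sumR.
  intros n Hn. apply Derive_correct. apply H; auto.
Qed.

Definition Gf N s := sumR (fun n => / INR n ^ 2 * (W s ^ n - 1)) N.
Definition Pf N s := sumR (fun n => W s ^ (n - 1) / INR n) N.

Lemma der_Gf N x : is_derive (Gf N) x (- exp x * Pf N x).
Proof.
  unfold Gf, Pf. rewrite <- sumR_scal. apply der_sumR.
  intros n Hn. destruct n as [|k]; [lia|].
  unfold W. auto_derive; auto. fixINR. simpl pow. replace (S k - 1)%nat with k by lia.
  rewrite ?Nat.sub_0_r. toR. field. apply not_0_INR; lia.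
Qed.

Lemma exd_Pf N x : ex_derive (Pf N) x.
Proof. unfold Pf. apply exd_sumR. intros n Hn. unfold W. auto_derive. auto. Qed.
Lemma exd_Gf N x : ex_derive (Gf N) x.
Proof. exists (- exp x * Pf N x). apply der_Gf. Qed.

Ltac exd := repeat match goal with |- _ /\ _ => split end;
  try (exact (exd_Gf _ _)); try (exact (exd_Pf _ _)); auto.

Lemma Gf_L N : Gf N L = GL N.
Proof. unfold Gf, GL, W. rewrite exp_L. replace (1 - 2) with (-1) by ring. auto. Qed.
Lemma K1 m N : is_RInt (fun s => s ^ m * Gf N s) 0 L (sumR (fun n => / INR n ^ 2 * (Iz m n - Iz m 0)) N).
Proof.
  assert (HL := L_pos).
  induction N.
  - simpl. assert (H := isRI_scal _ _ _ 0 _ (Iz_correct m 0)).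
    replace (0 * Iz m 0) with 0 in H by ring.
    eapply isRI_ext; [| |apply H]. lra.
    intros x Hx. unfold Gf. simpl. ring.
  - simpl sumR.
    eapply isRI_ext; [| |apply (isRI_plus _ _ _ _ _ _ IHN
       (isRI_scal _ _ _ (/ INR (S N) ^ 2) _ (isRI_minus _ _ _ _ _ _ (Iz_correct m (S N)) (Iz_correct m 0))))].
    lra. intros x Hx. unfold Gf. change (sumR ?f (S N)) with (sumR f N + f (S N)). cbv beta. rewrite pow_O. ring.
Qed.

Lemma K2 m N : is_RInt (fun s => s ^ (S m) * exp s * Pf N s) 0 L
   (INR (S m) * RInt (fun s => s ^ m * Gf N s) 0 L - L ^ (S m) * GL N).
Proof.
  assert (HL := L_pos).
  assert (Hd : forall x, 0 <= x <= L -> is_derive (fun s => s ^ (S m) * Gf N s) x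
     (INR (S m) * (x ^ m * Gf N x) - x ^ (S m) * exp x * Pf N x)).
  { intros x Hx.
    assert (Hp : is_derive (fun s => s ^ (S m)) x (INR (S m) * x ^ m)).
    { auto_derive; auto. fixINR. simpl pred. toR. ring. }
    assert (H := der_mult (fun s => s ^ (S m)) (Gf N) x _ _ Hp (der_Gf N x)).
    replace (INR (S m) * (x ^ m * Gf N x) - x ^ S m * exp x * Pf N x) with
      (INR (S m) * x ^ m * Gf N x + x ^ (S m) * (- exp x * Pf N x)) by ring. exact H. }
  assert (Hc : forall x, 0 <= x <= L -> continuous (fun x => INR (S m) * (x ^ m * Gf N x) - x ^ (S m) * exp x * Pf N x) x).
  { intros x Hx. refine (cont_of_exd _ x _). auto_derive; exd. }
  assert (H1 := isRI_FTC _ _ 0 L ltac:(lra) Hd Hc).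
  assert (HG : is_RInt (fun s => s ^ m * Gf N s) 0 L (RInt (fun s => s ^ m * Gf N s) 0 L)).
  { apply isRI_cont. lra. intros x Hx. refine (cont_of_exd _ x _). auto_derive; exd. }
  assert (H2 := isRI_minus _ _ _ _ _ _ (isRI_scal _ _ _ (INR (S m)) _ HG) H1).
  assert (H3 : is_RInt (fun x => (fun x0 : R => INR (S m) * (fun s : R => s ^ m * Gf N s) x0) x -
     (fun x0 : R => INR (S m) * (x0 ^ m * Gf N x0) - x0 ^ S m * exp x0 * Pf N x0) x) 0 L
     (INR (S m) * RInt (fun s : R => s ^ m * Gf N s) 0 L - (L ^ S m * Gf N L - 0 ^ S m * Gf N 0))) by exact H2.
  rewrite Gf_L, (pow_i (S m)) in H3 by lia.
  replace (INR (S m) * RInt (fun s : R => s ^ m * Gf N s) 0 L - L ^ S m * GL N) with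
    (INR (S m) * RInt (fun s : R => s ^ m * Gf N s) 0 L - (L ^ S m * GL N - 0 * Gf N 0)) by ring.
  eapply isRI_ext; [| |exact H3]. lra. intros x Hx. cbv beta. ring.
Qed.

Lemma exp_le x y : x <= y -> exp x <= exp y.
Proof. intros [H|H]. left; apply exp_increasing; auto. subst; lra. Qed.

Lemma pow_le1 x n : 0 <= x <= 1 -> x ^ n <= 1.
Proof. intros H. induction n; simpl. lra. assert (0 <= x ^ n) by (apply pow_le; lra). nra. Qed.

Definition Qf N s := sumR (fun n => W s ^ n / INR n) N.
Definition Rf N s := s + Qf N s.
Definition Ef N s := sz (fun k => exp (- INR k * s)) N.

Lemma W_Pf N s : W s * Pf N s = Qf N s.
Proof. unfold Pf, Qf. rewrite <- sumR_scal. apply sumR_ext. intros n Hn.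
  destruct n as [|k]; [lia|]. simpl. rewrite Nat.sub_0_r. unfold Rdiv. ring. Qed.

Lemma geom w N : (1 - w) * sumR (fun n => w ^ (n - 1)) N = 1 - w ^ N.
Proof. induction N. simpl. ring. change (sumR (fun n => w ^ (n - 1)) (S N)) with
  (sumR (fun n => w ^ (n - 1)) N + w ^ (S N - 1)). rewrite Rmult_plus_distr_l, IHN.
  simpl. rewrite Nat.sub_0_r. ring. Qed.

Lemma der_Rf N x : is_derive (Rf N) x (W x ^ N).
Proof.
  unfold Rf, Qf.
  assert (H := der_sumR (fun n s => W s ^ n / INR n) (fun n => - exp x * W x ^ (n - 1)) N x).
  assert (H' : is_derive (fun s => sumR (fun n => W s ^ n / INR n) N) x (sumR (fun n => - exp x * W x ^ (n - 1)) N)).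
  { apply H. intros n Hn. destruct n as [|k]; [lia|]. unfold W. auto_derive; auto. fixINR.
    simpl pred. replace (S k - 1)%nat with k by lia. toR. field. apply not_0_INR; lia. }
  assert (H2 := der_plus (fun s => s) _ x 1 _ (is_derive_id (K:=R_AbsRing) x) H').
  rewrite sumR_scal in H2. replace (W x ^ N) with (1 + - exp x * sumR (fun n => W x ^ (n - 1)) N).
  exact H2. pose proof (geom (W x) N). unfold W in *. replace (1 - (1 - exp x)) with (exp x) in H0 by ring.
  rewrite Ropp_mult_distr_l_reverse, H0. ring.
Qed.

Lemma Rf_0 N : Rf N 0 = 0.
Proof. unfold Rf, Qf. rewrite (sumR_ext _ (fun _ => 0)). rewrite sumR_zero. ring.
  intros n Hn. unfold W. rewrite exp_0. replace (1 - 1) with 0 by ring. rewrite pow_i by lia. unfold Rdiv; ring. Qed.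

Lemma Rf_bound N s : 0 <= s -> Rabs (Rf N s) <= s * (exp s - 1) ^ N.
Proof.
  intros Hs.
  assert (Hd : forall x, 0 <= x <= s -> is_derive (Rf N) x (W x ^ N)) by (intros; apply der_Rf).
  assert (Hc : forall x, 0 <= x <= s -> continuous (fun x => W x ^ N) x) by (unfold W; cont).
  assert (H := isRI_FTC _ _ 0 s Hs Hd Hc). rewrite Rf_0, Rminus_0_r in H.
  assert (Hb : forall x, Rmin 0 s <= x <= Rmax 0 s -> norm ((fun x0 : R => W x0 ^ N) x) <= (exp s - 1) ^ N).
  2: { assert (H2 := norm_RInt_le_const_abs (V:=R_NormedModule) _ 0 s _ ((exp s - 1) ^ N) Hb H).
    change (norm (Rf N s)) with (Rabs (Rf N s)) in H2. rewrite Rminus_0_r, (Rabs_right s) in H2 by lra. exact H2. }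
  intros x Hx. rewrite Rmin_left, Rmax_right in Hx by lra. change (norm (W x ^ N)) with (Rabs (W x ^ N)).
    rewrite <- RPow_abs. apply pow_incr. split. apply Rabs_pos.
    unfold W. rewrite Rabs_left1. pose proof (exp_le x s ltac:(lra)). lra.
    pose proof (exp_le 0 x ltac:(lra)). rewrite exp_0 in H0. lra.
Qed.

Lemma Ef_geom N s : (exp s - 1) * Ef N s = exp s - exp (- INR N * s).
Proof.
  unfold Ef. induction N.
  - simpl. replace (- 0 * s) with 0 by ring. rewrite exp_0. ring.
  - change (sz ?f (S N)) with (sz f N + f (S N)). cbv beta. rewrite Rmult_plus_distr_l, IHN.
    assert (exp s * exp (- INR (S N) * s) = exp (- INR N * s)).
    { rewrite <- exp_plus. f_equal. rewrite S_INR. ring. }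
    replace ((exp s - 1) * exp (- INR (S N) * s)) with (exp s * exp (- INR (S N) * s) - exp (- INR (S N) * s)) by ring. rewrite H. ring.
Qed.

Definition dd m N s := s ^ (S m) * exp s * Pf N s - s ^ (S (S m)) * Ef N s.

Lemma dd_ident m N s : (exp s - 1) * dd m N s = - s ^ (S m) * exp s * Rf N s + s ^ (S (S m)) * exp (- INR N * s).
Proof.
  unfold dd. assert (H1 := W_Pf N s). assert (H2 := Ef_geom N s).
  assert ((exp s - 1) * Pf N s = s - Rf N s).
  { unfold Rf. rewrite <- H1. unfold W. ring. }
  transitivity (s ^ (S m) * exp s * ((exp s - 1) * Pf N s) - s ^ (S (S m)) * ((exp s - 1) * Ef N s)). ring.
  rewrite H, H2. simpl. ring.
Qed.

Lemma exp2_ge s : exp s - 1 <= exp (2 * (s - L)).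
Proof.
  assert (H : exp (2 * (s - L)) * 4 = exp s * exp s).
  { replace 4 with (exp L * exp L) by (rewrite exp_L; ring).
    rewrite <- !exp_plus. f_equal. ring. }
  pose proof (pow2_ge_0 (exp s - 2)). nra.
Qed.

Lemma sq_bound N s : (1 <= N)%nat -> 0 < s -> s * exp (- INR N * s) <= / INR N.
Proof.
  intros HN Hs. assert (HN' := INR_pos N HN).
  assert (H1 : 1 + INR N * s < exp (INR N * s)) by (apply exp_ineq1; nra).
  replace (- INR N * s) with (- (INR N * s)) by ring. rewrite exp_Ropp.
  assert (0 < exp (INR N * s)) by apply exp_pos.
  apply Rmult_le_reg_r with (exp (INR N * s) * INR N). nra.
  replace (s * / exp (INR N * s) * (exp (INR N * s) * INR N)) with (s * INR N) by (field; lra).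
  replace (/ INR N * (exp (INR N * s) * INR N)) with (exp (INR N * s)) by (field; lra). nra.
Qed.

Lemma dd_bound m k s : 0 <= s <= L ->
  Rabs (dd m (S (S k)) s) <= 2 * exp (2 * (s - L)) ^ (S k) + / INR (S (S k)).
Proof.
  intros Hs. assert (HL := L_pos). assert (HL1 := L_lt1).
  assert (HX : 0 < exp (2 * (s - L)) ^ (S k)) by (apply pow_lt, exp_pos).
  assert (HNi : 0 < / INR (S (S k))) by (apply Rinv_0_lt_compat, INR_pos; lia).
  destruct (Req_dec s 0) as [->|Hs0].
  { unfold dd. rewrite !pow_i by lia. replace (0 * exp 0 * Pf (S (S k)) 0 - 0 * Ef (S (S k)) 0) with 0 by ring.
    rewrite Rabs_R0. lra. }
  assert (Hsp : 0 < s) by lra.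
  set (N := S (S k)) in *.
  set (D := exp s - 1).
  assert (HD : s < D) by (unfold D; pose proof (exp_ineq1 s Hs0); lra).
  set (e := exp s).
  assert (He : 0 < e <= 2) by (unfold e; split; [apply exp_pos| rewrite <- exp_L; apply exp_le; lra]).
  set (a := s ^ (S m)).
  assert (Ha : 0 < a <= s).
  { unfold a. simpl. assert (0 < s ^ m) by (apply pow_lt; lra).
    assert (s ^ m <= 1) by (apply pow_le1; lra). split; nra. }
  set (R := Rf N s).
  assert (HR : Rabs R <= s * D ^ N) by (apply Rf_bound; lra).
  set (q := exp (- INR N * s)).
  assert (Hq0 : 0 < q) by apply exp_pos.
  assert (Hq : s * q <= / INR N) by (apply sq_bound; unfold N; lia || lra).
  assert (Hid : D * dd m N s = - a * e * R + a * s * q).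
  { unfold D, a, e, R, q. rewrite dd_ident. simpl. ring. }
  assert (HDX : D ^ (S k) <= exp (2 * (s - L)) ^ (S k)) by (apply pow_incr; split; [lra| apply exp2_ge]).
  assert (HDk : 0 <= D ^ (S k)) by (apply pow_le; lra).
  assert (HDN : D ^ N = D * D ^ (S k)) by (unfold N; simpl; ring).
  assert (H1 : Rabs (D * dd m N s) <= a * e * (s * D ^ N) + a * s * q).
  { rewrite Hid. eapply Rle_trans; [apply Rabs_triang|]. rewrite !Rabs_mult, Rabs_Ropp.
    rewrite (Rabs_right a), (Rabs_right e), (Rabs_right s), (Rabs_right q) by lra.
    assert (0 <= a * e) by nra.
    apply Rplus_le_compat. apply Rmult_le_compat_l; auto. nra. }
  assert (H2 : a * e * (s * D ^ N) <= D * (2 * exp (2 * (s - L)) ^ (S k))).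
  { rewrite HDN. assert (a * e * s <= 2).
    { assert (a * s <= 1) by nra. nra. }
    assert (0 <= D * D ^ (S k)) by nra.
    replace (a * e * (s * (D * D ^ S k))) with ((a * e * s) * (D * D ^ S k)) by ring.
    apply Rle_trans with (2 * (D * D ^ S k)). apply Rmult_le_compat_r; lra.
    nra. }
  assert (H3 : a * s * q <= D * / INR N).
  { replace (a * s * q) with (a * (s * q)) by ring. apply Rmult_le_compat; nra. }
  rewrite Rabs_mult, (Rabs_right D) in H1 by lra.
  apply Rmult_le_reg_l with D. lra. lra.
Qed.

Lemma exd_Ef N x : ex_derive (Ef N) x.
Proof.
  unfold Ef. induction N; simpl.
  - auto_derive. auto.
  - apply (ex_derive_plus (K:=R_AbsRing) (V:=R_NormedModule)). exact IHN. auto_derive. auto.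
Qed.

Definition Av m N := RInt (fun s => s ^ (S m) * exp s * Pf N s) 0 L.
Definition Bv m N := RInt (fun s => s ^ (S (S m)) * Ef N s) 0 L.

Lemma Av_correct m N : is_RInt (fun s => s ^ (S m) * exp s * Pf N s) 0 L (Av m N).
Proof. apply isRI_cont. pose L_pos; lra. intros x Hx. refine (cont_of_exd _ x _). auto_derive; exd. Qed.

Lemma Bv_correct m N : is_RInt (fun s => s ^ (S (S m)) * Ef N s) 0 L (Bv m N).
Proof. apply isRI_cont. pose L_pos; lra. intros x Hx. refine (cont_of_exd _ x _). auto_derive.
  repeat match goal with |- _ /\ _ => split end; try exact (exd_Ef N x); auto. Qed.

Lemma Bv_value m N : Bv m N = sz (fun k => Jz (S (S m)) k) N.
Proof.
  apply is_RInt_unique. assert (HL := L_pos). unfold Ef.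
  induction N.
  - eapply isRI_ext; [| |apply Jz_correct]. lra. intros x Hx. simpl. reflexivity.
  - change (sz ?f (S N)) with (sz f N + f (S N)). eapply isRI_ext; [| |apply (isRI_plus _ _ _ _ _ _ IHN (Jz_correct (S (S m)) (S N)))]. lra.
    intros x Hx. cbv beta. change (sz ?f (S N)) with (sz f N + f (S N)). ring.
Qed.

Lemma Jz_k0 p : Jz p 0 = L ^ (S p) / INR (S p).
Proof.
  rewrite <- Iz_n0. unfold Jz, Iz. apply RInt_ext. intros x Hx. simpl. replace (- 0 * x) with 0 by ring. rewrite exp_0. ring.
Qed.

Lemma beta_int k : exists V, is_RInt (fun s => 2 * exp (2 * (s - L)) ^ (S k) + / INR (S (S k))) 0 L V /\
   V <= / INR (S k) + / INR (S (S k)).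
Proof.
  assert (HL := L_pos). assert (HL1 := L_lt1).
  assert (Hd : forall x, 0 <= x <= L -> is_derive (fun s => exp (2 * (s - L)) ^ (S k) / INR (S k) + s / INR (S (S k))) x
     (2 * exp (2 * (x - L)) ^ (S k) + / INR (S (S k)))).
  { intros x Hx. auto_derive; auto. fixINR. simpl pred. toR. simpl pow. rewrite !S_INR. pose proof (pos_INR k). field. lra. }
  assert (Hc : forall x, 0 <= x <= L -> continuous (fun s => 2 * exp (2 * (s - L)) ^ (S k) + / INR (S (S k))) x) by cont.
  eexists. split. exact (isRI_FTC _ _ 0 L ltac:(lra) Hd Hc).
  cbv beta. replace (2 * (L - L)) with 0 by ring. rewrite exp_0, pow1.
  assert (0 < exp (2 * (0 - L)) ^ S k) by (apply pow_lt, exp_pos).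
  assert (0 < INR (S k)) by (apply INR_pos; lia). assert (0 < INR (S (S k))) by (apply INR_pos; lia).
  assert (0 < / INR (S k)) by (apply Rinv_0_lt_compat; lra).
  assert (0 < / INR (S (S k))) by (apply Rinv_0_lt_compat; lra).
  unfold Rdiv. rewrite Rmult_0_l, Rplus_0_r, Rmult_1_l.
  assert (exp (2 * (0 - L)) ^ S k * / INR (S k) > 0) by nra.
  assert (L * / INR (S (S k)) <= / INR (S (S k))) by nra. lra.
Qed.

Lemma AB_bound m k : Rabs (Av m (S (S k)) - Bv m (S (S k))) <= / INR (S k) + / INR (S (S k)).
Proof.
  assert (HL := L_pos).
  destruct (beta_int k) as [V [HV HVle]].
  assert (H := isRI_minus _ _ _ _ _ _ (Av_correct m (S (S k))) (Bv_correct m (S (S k)))).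
  eapply Rle_trans; [|exact HVle].
  eapply (isRI_abs_le _ _ 0 L); [lra| |exact H| exact HV].
  intros x Hx. apply dd_bound. auto.
Qed.

Lemma AB_lim m : is_lim_seq (fun N => Av m N - Bv m N) 0.
Proof.
  apply (is_lim_seq_incr_n _ 2).
  assert (Hb : is_lim_seq (fun k => / INR (S k) + / INR (S (S k))) 0).
  { assert (H1 : is_lim_seq (fun k => / INR (S k)) 0).
    { replace (Finite 0) with (Rbar_inv p_infty) by auto. apply is_lim_seq_inv.
      apply (is_lim_seq_incr_1 INR). apply is_lim_seq_INR. discriminate. }
    replace 0 with (0 + 0) by ring. apply is_lim_seq_plus'. auto.
    apply (is_lim_seq_incr_1 (fun k => / INR (S k))). auto. }
  apply is_lim_seq_le_le with (u := fun k => - (/ INR (S k) + / INR (S (S k)))) (w := fun k => / INR (S k) + / INR (S (S k))).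
  - intros k. replace (k + 2)%nat with (S (S k)) by lia. apply Rabs_le_between. apply AB_bound.
  - replace (Finite 0) with (Rbar_opp 0) by (simpl; f_equal; ring). apply is_lim_seq_opp in Hb. exact Hb.
  - exact Hb.
Qed.

Definition Xv (m : nat) : R :=
  (-1) ^ m / INR (fact m) / INR (S m) *
  (L ^ (S m) * (- (3 / 2) * zetaR 2) +
   (L ^ (m + 3) / INR (m + 3) +
    INR (fact (m + 2)) * (zetaR (m + 3) - sz (fun j => L ^ j / INR (fact j) * Li (m + 3 - j) (1 / 2)) (m + 2)))).

Lemma key_limit m : is_lim_seq (fun N => sumR (fun n => / INR n ^ 2 * Phi m n) N) (Xv m).
Proof.
  set (c := (-1) ^ m / INR (fact m) / INR (S m)).
  assert (HSm : INR (S m) <> 0) by (apply not_0_INR; lia).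
  assert (Hs : forall N, sumR (fun n => / INR n ^ 2 * Phi m n) N =
     c * ((Jz (S (S m)) 0 + sumR (fun k => Jc (S (S m)) k) N) + (Av m N - Bv m N) + L ^ (S m) * GL N)).
  { intros N.
    assert (H1 := is_RInt_unique _ _ _ _ (K1 m N)).
    assert (H2 := is_RInt_unique _ _ _ _ (K2 m N)). fold (Av m N) in H2.
    assert (HB : Bv m N = Jz (S (S m)) 0 + sumR (fun k => Jc (S (S m)) k) N).
    { rewrite Bv_value, sz_sumR. f_equal. apply sumR_ext. intros k Hk. apply Jz_closed. lia. }
    rewrite <- HB.
    unfold Phi. rewrite (sumR_ext _ (fun n => (-1) ^ m / INR (fact m) * (/ INR n ^ 2 * (Iz m n - Iz m 0)))).
    2: { intros; ring. }
    rewrite sumR_scal, <- H1. unfold c.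
    replace (RInt (fun s => s ^ m * Gf N s) 0 L) with ((Av m N + L ^ (S m) * GL N) / INR (S m)).
    field. split; auto. apply INR_fact_neq_0.
    rewrite H2. field. auto. }
  eapply is_lim_seq_ext. { intros N. symmetry. apply Hs. }
  assert (Hlim := is_lim_seq_scal_l _ c _
     (is_lim_seq_plus' _ _ _ _ (is_lim_seq_plus' _ _ _ _
        (is_lim_seq_plus' _ _ _ _ (is_lim_seq_const (Jz (S (S m)) 0)) (Jc_sum_lim (S (S m)) ltac:(lia)))
        (AB_lim m))
     (is_lim_seq_scal_l _ (L ^ (S m)) _ GL_lim))).
  simpl in Hlim.
  replace (Xv m) with (c * (Jz (S (S m)) 0 + (INR (fact (S (S m))) * zetaR (S (S (S m))) -
      sz (fun j => INR (fact (S (S m))) / INR (fact j) * L ^ j * Li (S (S (S m)) - j) (1 / 2)) (S (S m))) + 0 +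
      L ^ S m * (- (3 / 2) * zetaR 2))).
  exact Hlim.
  unfold Xv, c. rewrite Jz_k0.
  replace (m + 3)%nat with (S (S (S m))) by lia. replace (m + 2)%nat with (S (S m)) by lia.
  rewrite (sz_ext (fun j => INR (fact (S (S m))) / INR (fact j) * L ^ j * Li (S (S (S m)) - j) (1 / 2))
                  (fun j => INR (fact (S (S m))) * (L ^ j / INR (fact j) * Li (S (S (S m)) - j) (1 / 2)))).
  rewrite sz_scal. ring.
  intros r Hr. unfold Rdiv. ring.
Qed.

Lemma lim_mzs j c : (c = 1 \/ c = -1)%Z ->
  is_lim_seq (mzsp (2%Z :: ones j ++ c :: nil)) (mzs (2%Z :: ones j ++ c :: nil)).
Proof. intros Hc. destruct (conv_A j c Hc) as [l Hl]. rewrite (mzs_lim _ l Hl). auto. Qed.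

Lemma seq_ident m N :
  mzsp (2%Z :: ones m ++ (-1)%Z :: nil) N =
  sumR (fun n => / INR n ^ 2 * Phi m n) N -
  sumR (fun r => cL r * (mzsp (2%Z :: ones (m - r) ++ (-1)%Z :: nil) N - mzsp (2%Z :: ones (m - r) ++ 1%Z :: nil) N)) m.
Proof.
  rewrite mzsp_2.
  rewrite (sumR_ext (fun r => cL r * (mzsp (2%Z :: ones (m - r) ++ (-1)%Z :: nil) N - mzsp (2%Z :: ones (m - r) ++ 1%Z :: nil) N))
            (fun r => sumR (fun n => cL r * (/ INR n ^ 2 * Tz (m - r) n)) N)).
  2: { intros r _. rewrite !mzsp_2. rewrite <- sumR_minus, <- sumR_scal. apply sumR_ext.
       intros n _. unfold Tz, Mz. ring. }
  rewrite <- sumR_swap. rewrite <- sumR_minus. apply sumR_ext. intros n _.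
  rewrite Phi_ident, sz_sumR.
  replace (sumR (fun r => cL r * (/ INR n ^ 2 * Tz (m - r) n)) m) with (/ INR n ^ 2 * sumR (fun r => cL r * Tz (m - r) n) m).
  2: { rewrite <- sumR_scal. apply sumR_ext. intros; ring. }
  unfold cL at 1. rewrite pow_O. simpl fact. change (INR 1) with 1. replace (m - 0)%nat with m by lia.
  unfold Tz. rewrite Mz_1. unfold Mz. unfold Rdiv. rewrite Rinv_1. ring.
Qed.

Lemma main_expr m : mzs (2%Z :: ones m ++ (-1)%Z :: nil) =
  Xv m - sumR (fun r => cL r * (mzs (2%Z :: ones (m - r) ++ (-1)%Z :: nil) - mzs (2%Z :: ones (S (m - r))))) m.
Proof.
  apply mzs_lim.
  eapply is_lim_seq_ext. { intros N. symmetry. apply seq_ident. }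
  apply is_lim_seq_minus'. apply key_limit.
  apply lim_sumR_fin. intros r _.
  apply (is_lim_seq_scal_l _ (cL r) (Finite _)).
  rewrite ones_S.
  apply is_lim_seq_minus'; apply lim_mzs; auto.
Qed.

Lemma m1_sq j : (-1) ^ j * (-1) ^ j = 1.
Proof. rewrite <- Rpow_mult_distr. replace (-1 * -1) with 1 by ring. apply pow1. Qed.

Lemma coef_ident m i : (1 <= i <= m + 1)%nat ->
  cL (m + 1 - i) = (-1) ^ m / INR (fact (m + 1)) *
    ((-1) ^ (i - 1) * INR (fact i) * Binomial.C (m + 1) i * L ^ (m + 1 - i)).
Proof.
  intros Hi. unfold cL, Binomial.C.
  set (k := (m + 1 - i)%nat). set (j := (i - 1)%nat).
  replace m with (k + j)%nat at 1 by (unfold k, j; lia).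
  rewrite pow_add. replace (-L) with (-1 * L) by ring. rewrite Rpow_mult_distr.
  assert (INR (fact (m + 1)) <> 0) by apply INR_fact_neq_0.
  assert (INR (fact i) <> 0) by apply INR_fact_neq_0.
  assert (INR (fact k) <> 0) by apply INR_fact_neq_0.
  pose proof (m1_sq j).
  field_simplify; auto. rewrite <- Rsqr_pow2. unfold Rsqr. rewrite H2. field. auto.
Qed.

Theorem theorem2p6 (m : nat) (hm : (1 <= m)%nat) :
  mzs (2%Z :: ones m ++ (-1)%Z :: nil) =
    INR (m + 2) / INR (fact (m + 3)) * (-1) ^ m * (ln 2) ^ (m + 3)
  + INR (m + 2) * (-1) ^ m * (zetaR (m + 3) - Li (m + 3) (1 / 2))
  - INR (m + 2) * (-1) ^ m *
      sumR (fun j => (ln 2) ^ (m + 3 - j) / INR (fact (m + 3 - j)) * Li j (1 / 2)) (m + 2)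
  - 3 / 2 * (-1) ^ m / INR (fact (m + 1)) * zetaR 2 * (ln 2) ^ (m + 1)
  - (-1) ^ m / INR (fact (m + 1)) *
      sumR (fun i => (-1) ^ (i - 1) * INR (fact i) * Binomial.C (m + 1) i
                     * (ln 2) ^ (m + 1 - i)
                     * (mzs (2%Z :: ones (i - 1) ++ (-1)%Z :: nil) - mzs (2%Z :: ones i)))
           m.
Proof.
  rewrite main_expr.
  assert (Hs : sumR (fun r => cL r * (mzs (2%Z :: ones (m - r) ++ (-1)%Z :: nil) - mzs (2%Z :: ones (S (m - r))))) m =
    (-1) ^ m / INR (fact (m + 1)) *
      sumR (fun i => (-1) ^ (i - 1) * INR (fact i) * Binomial.C (m + 1) i
                     * (ln 2) ^ (m + 1 - i)
                     * (mzs (2%Z :: ones (i - 1) ++ (-1)%Z :: nil) - mzs (2%Z :: ones i))) m).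
  { rewrite sumR_rev. rewrite <- sumR_scal. apply sumR_ext. intros i Hi.
    replace (m - (S m - i))%nat with (i - 1)%nat by lia. replace (S (i - 1)) with i by lia.
    replace (S m - i)%nat with (m + 1 - i)%nat by lia. rewrite coef_ident by lia. unfold L. ring. }
  rewrite Hs. clear Hs.
  assert (Hz : sz (fun j => L ^ j / INR (fact j) * Li (m + 3 - j) (1 / 2)) (m + 2) =
     Li (m + 3) (1 / 2) + sumR (fun j => (ln 2) ^ (m + 3 - j) / INR (fact (m + 3 - j)) * Li j (1 / 2)) (m + 2)).
  { rewrite sz_sumR. rewrite pow_O. simpl fact. change (INR 1) with 1. replace (m + 3 - 0)%nat with (m + 3)%nat by lia.
    f_equal. field. rewrite sumR_rev. apply sumR_ext. intros i Hi.
    replace (S (m + 2) - i)%nat with (m + 3 - i)%nat by lia.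
    replace (m + 3 - (m + 3 - i))%nat with i by lia. unfold L. auto. }
  unfold Xv. rewrite Hz. clear Hz. unfold L.
  set (SS := sumR _ (m + 2)). set (SD := sumR _ m).
  replace (m + 3)%nat with (S (S (S m))) by lia.
  replace (m + 2)%nat with (S (S m)) by lia.
  replace (m + 1)%nat with (S m) by lia.
  rewrite !fact_simpl, !mult_INR, !S_INR.
  assert (INR (fact m) <> 0) by apply INR_fact_neq_0.
  assert (0 <= INR m) by apply pos_INR.
  field. repeat split; try lra.
Qed.
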